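(* There is $R_0$ such that the following holds for $R\ge R_0$ with $R^2\in\mathbb{Z}$. Let $\mathcal{E}=\mathbb{Z}^3\cap\{x:|x|=R\}$ and let $\mathcal{G}$ be the graph on the vertex set $\mathcal{E}$ in which $m,n\in\mathcal{E}$ are joined when $|m-n|<R^{1/5}$. Then each connected component of $\mathcal{G}$ is contained in an affine plane of $\mathbb{R}^3$. *)

(* Defs.v *)
From Stdlib Require Export Reals Relations.
Open Scope R_scope.

Definition zpt : Type := (Z * Z * Z)%type.

Definition px (m : zpt) : R := let '(a, _, _) := m in IZR a.
Definition py (m : zpt) : R := let '(_, b, _) := m in IZR b.
Definition pz (m : zpt) : R := let '(_, _, c) := m in IZR c.

Definition norm3 (m : zpt) : R := sqrt (px m ^ 2 + py m ^ 2 + pz m ^ 2).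
Definition dist3 (m n : zpt) : R :=
  sqrt ((px m - px n) ^ 2 + (py m - py n) ^ 2 + (pz m - pz n) ^ 2).

Definition on_sphere (Rad : R) (m : zpt) : Prop := norm3 m = Rad.

Definition adj (Rad : R) (m n : zpt) : Prop :=
  on_sphere Rad m /\ on_sphere Rad n /\ dist3 m n < Rpower Rad (1/5).

Definition gconnected (Rad : R) : relation zpt := clos_refl_trans zpt (adj Rad).

Definition component (Rad : R) (m : zpt) (n : zpt) : Prop :=
  on_sphere Rad n /\ gconnected Rad m n.

Definition in_affine_plane (S : zpt -> Prop) : Prop :=
  exists a b c d : R, (a <> 0 \/ b <> 0 \/ c <> 0) /\
    forall n, S n -> a * px n + b * py n + c * pz n = d.

(* Main.v *)
Require Import Defs.
From Stdlib Require Import Reals Relations Lra Lia Psatz ZArith Classical.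
Open Scope R_scope.

Record v3 := mk3 { cx : R; cy : R; cz : R }.
Definition vec (m : zpt) : v3 := mk3 (px m) (py m) (pz m).
Definition vsub (a b : v3) := mk3 (cx a - cx b) (cy a - cy b) (cz a - cz b).
Definition dot (a b : v3) := cx a * cx b + cy a * cy b + cz a * cz b.
Definition cross (a b : v3) :=
  mk3 (cy a * cz b - cz a * cy b) (cz a * cx b - cx a * cz b) (cx a * cy b - cy a * cx b).
Definition n2 a := dot a a.
Definition det u v w := dot (cross u v) w.

Lemma n2_nonneg a : 0 <= n2 a.
Proof. destruct a; unfold n2, dot; simpl; nra. Qed.

Lemma n2_tri a b c : n2 (vsub a c) <= 2 * (n2 (vsub a b) + n2 (vsub b c)).
Proof. destruct a, b, c; unfold n2, dot, vsub; simpl.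
  assert (forall x y z, (x - z)*(x-z) <= 2*((x-y)*(x-y)) + 2*((y-z)*(y-z))) by (intros; pose proof (pow2_ge_0 (x - 2*y + z)); nra).
  pose proof (H cx0 cx1 cx2); pose proof (H cy0 cy1 cy2); pose proof (H cz0 cz1 cz2). nra. Qed.

Lemma n2_symm a b : n2 (vsub a b) = n2 (vsub b a).
Proof. destruct a, b; unfold n2, dot, vsub; simpl; ring. Qed.

Lemma dot_sub N a b : dot N (vsub a b) = dot N a - dot N b.
Proof. destruct N, a, b; unfold dot, vsub; simpl; ring. Qed.

Lemma det_bound A B C D K :
  n2 B = n2 A -> n2 C = n2 A -> n2 D = n2 A ->
  n2 (vsub B A) <= K -> n2 (vsub C A) <= K -> n2 (vsub D A) <= K ->
  (det (vsub B A) (vsub C A) (vsub D A))^2 * n2 A <= 9/4 * K^4.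
Proof.
  intros HB HC HD Hu Hv Hw.
  set (u := vsub B A) in *. set (v := vsub C A) in *. set (w := vsub D A) in *.
  assert (Au : dot A u = - n2 u / 2).
  { assert (n2 B = n2 A + 2 * dot A u + n2 u) by (unfold u; destruct A, B; unfold n2, dot, vsub; simpl; ring). lra. }
  assert (Av : dot A v = - n2 v / 2).
  { assert (n2 C = n2 A + 2 * dot A v + n2 v) by (unfold v; destruct A, C; unfold n2, dot, vsub; simpl; ring). lra. }
  assert (Aw : dot A w = - n2 w / 2).
  { assert (n2 D = n2 A + 2 * dot A w + n2 w) by (unfold w; destruct A, D; unfold n2, dot, vsub; simpl; ring). lra. }
  set (a1 := dot A u) in *. set (a2 := dot A v) in *. set (a3 := dot A w) in *.
  set (X1 := cross v w). set (X2 := cross w u). set (X3 := cross u v).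
  assert (Hid : (det u v w)^2 * n2 A =
     n2 (mk3 (a1 * cx X1 + a2 * cx X2 + a3 * cx X3)
             (a1 * cy X1 + a2 * cy X2 + a3 * cy X3)
             (a1 * cz X1 + a2 * cz X2 + a3 * cz X3))).
  { unfold a1, a2, a3, X1, X2, X3, det. clearbody u v w.
    destruct A, u, v, w; unfold n2, dot, cross; simpl; ring. }
  assert (H3 : n2 (mk3 (a1 * cx X1 + a2 * cx X2 + a3 * cx X3)
             (a1 * cy X1 + a2 * cy X2 + a3 * cy X3)
             (a1 * cz X1 + a2 * cz X2 + a3 * cz X3))
        <= 3 * (a1^2 * n2 X1 + a2^2 * n2 X2 + a3^2 * n2 X3)).
  { clearbody X1 X2 X3 a1 a2 a3. destruct X1, X2, X3; unfold n2, dot; simpl.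
    assert (forall p q r, (p+q+r)^2 <= 3*(p^2+q^2+r^2)) by (intros; pose proof (pow2_ge_0 (p-q)); pose proof (pow2_ge_0 (q-r)); pose proof (pow2_ge_0 (p-r)); nra).
    pose proof (H (a1*cx0) (a2*cx1) (a3*cx2)).
    pose proof (H (a1*cy0) (a2*cy1) (a3*cy2)).
    pose proof (H (a1*cz0) (a2*cz1) (a3*cz2)). nra. }
  assert (Lag : forall p q, n2 (cross p q) <= n2 p * n2 q).
  { intros p q. assert (n2 (cross p q) = n2 p * n2 q - (dot p q)^2)
      by (destruct p, q; unfold n2, dot, cross; simpl; ring). nra. }
  pose proof (n2_nonneg u); pose proof (n2_nonneg v); pose proof (n2_nonneg w).
  assert (B1 : a1^2 * n2 X1 <= K^2/4 * K^2).
  { apply Rmult_le_compat. nra. apply n2_nonneg. rewrite Au. nra.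
    eapply Rle_trans. apply Lag. replace (K^2) with (K*K) by ring. apply Rmult_le_compat; lra. }
  assert (B2 : a2^2 * n2 X2 <= K^2/4 * K^2).
  { apply Rmult_le_compat. nra. apply n2_nonneg. rewrite Av. nra.
    eapply Rle_trans. apply Lag. replace (K^2) with (K*K) by ring. apply Rmult_le_compat; lra. }
  assert (B3 : a3^2 * n2 X3 <= K^2/4 * K^2).
  { apply Rmult_le_compat. nra. apply n2_nonneg. rewrite Aw. nra.
    eapply Rle_trans. apply Lag. replace (K^2) with (K*K) by ring. apply Rmult_le_compat; lra. }
  rewrite Hid. nra.
Qed.

Definition isZ (r : R) := exists z, r = IZR z.
Lemma isZ_add a b : isZ a -> isZ b -> isZ (a + b).
Proof. intros [x ->] [y ->]; exists (x+y)%Z; rewrite plus_IZR; auto. Qed.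
Lemma isZ_sub a b : isZ a -> isZ b -> isZ (a - b).
Proof. intros [x ->] [y ->]; exists (x-y)%Z; rewrite minus_IZR; auto. Qed.
Lemma isZ_mul a b : isZ a -> isZ b -> isZ (a * b).
Proof. intros [x ->] [y ->]; exists (x*y)%Z; rewrite mult_IZR; auto. Qed.
Lemma isZ_opp a : isZ a -> isZ (- a).
Proof. intros [x ->]; exists (-x)%Z; rewrite opp_IZR; auto. Qed.
Lemma isZ_IZR z : isZ (IZR z). Proof. exists z; auto. Qed.

Lemma det_isZ a b c d :
  isZ (det (vsub (vec b) (vec a)) (vsub (vec c) (vec a)) (vsub (vec d) (vec a))).
Proof.
  destruct a as [[a1 a2] a3], b as [[b1 b2] b3], c as [[c1 c2] c3], d as [[d1 d2] d3].
  unfold det, dot, cross, vsub, vec, px, py, pz; simpl.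
  repeat (apply isZ_add || apply isZ_sub || apply isZ_mul || apply isZ_opp || apply isZ_IZR).
Qed.

Lemma vec_inj a b : vec a = vec b -> a = b.
Proof.
  destruct a as [[a1 a2] a3], b as [[b1 b2] b3]; unfold vec, px, py, pz; simpl.
  intros H; injection H; intros; apply eq_IZR in H0; apply eq_IZR in H1; apply eq_IZR in H2; subst; auto.
Qed.

Lemma sumsq0 a b c : a*a+b*b+c*c = 0 -> a = 0 /\ b = 0 /\ c = 0.
Proof.
  intros H. pose proof (Rle_0_sqr a); pose proof (Rle_0_sqr b); pose proof (Rle_0_sqr c).
  unfold Rsqr in *.
  assert (a*a = 0) by lra. assert (b*b = 0) by lra. assert (c*c = 0) by lra.
  apply Rmult_integral in H3; apply Rmult_integral in H4; apply Rmult_integral in H5.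
  lra.
Qed.

Lemma noncollinear A B C :
  n2 B = n2 A -> n2 C = n2 A -> B <> A -> C <> A -> C <> B ->
  n2 (cross (vsub B A) (vsub C A)) <> 0.
Proof.
  intros HB HC nBA nCA nCB Hz.
  assert (Au : n2 B = n2 A + 2 * dot A (vsub B A) + n2 (vsub B A))
    by (destruct A, B; unfold n2, dot, vsub; simpl; ring).
  assert (Av : n2 C = n2 A + 2 * dot A (vsub C A) + n2 (vsub C A))
    by (destruct A, C; unfold n2, dot, vsub; simpl; ring).
  assert (Huv : n2 (vsub C B) = n2 (vsub B A) - 2 * dot (vsub B A) (vsub C A) + n2 (vsub C A))
    by (destruct A, B, C; unfold n2, dot, vsub; simpl; ring).
  assert (HBA : forall X Y, n2 (vsub X Y) = 0 -> X = Y).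
  { intros [x1 x2 x3] [y1 y2 y3]; unfold n2, dot, vsub; simpl; intros H.
    pose proof (Rle_0_sqr (x1 - y1)); pose proof (Rle_0_sqr (x2 - y2)); pose proof (Rle_0_sqr (x3 - y3)).
    unfold Rsqr in *.
    assert ((x1-y1)*(x1-y1) = 0) by lra. assert ((x2-y2)*(x2-y2) = 0) by lra. assert ((x3-y3)*(x3-y3) = 0) by lra.
    apply Rmult_integral in H3; apply Rmult_integral in H4; apply Rmult_integral in H5.
    assert (x1 = y1) by lra. assert (x2 = y2) by lra. assert (x3 = y3) by lra. subst; auto. }
  assert (U0 : n2 (vsub B A) <> 0) by (intro H; apply nBA, HBA, H).
  assert (V0 : n2 (vsub C A) <> 0) by (intro H; apply nCA, HBA, H).
  assert (W0 : n2 (vsub C B) <> 0) by (intro H; apply nCB, HBA, H).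
  revert Au Av Huv U0 V0 W0 Hz. clear -HB HC.
  set (u := vsub B A). set (v := vsub C A). clearbody u v.
  intros Au Av Huv U0 V0 W0 Hz.
  destruct u as [u1 u2 u3], v as [v1 v2 v3], A as [A1 A2 A3].
  unfold n2, dot, cross in *; simpl in *.
  set (c1 := u2 * v3 - u3 * v2) in *. set (c2 := u3 * v1 - u1 * v3) in *.
  set (c3 := u1 * v2 - u2 * v1) in *.
  destruct (sumsq0 _ _ _ Hz) as [Hc1 [Hc2 Hc3]].
  set (U := u1*u1+u2*u2+u3*u3) in *. set (V := v1*v1+v2*v2+v3*v3) in *.
  set (s := u1*v1+u2*v2+u3*v3) in *.
  assert (E1 : U * v1 - s * u1 = u3 * c2 - u2 * c3) by (unfold U, s, c2, c3; ring).
  assert (E2 : U * v2 - s * u2 = u1 * c3 - u3 * c1) by (unfold U, s, c3, c1; ring).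
  assert (E3 : U * v3 - s * u3 = u2 * c1 - u1 * c2) by (unfold U, s, c1, c2; ring).
  rewrite Hc2, Hc3 in E1. rewrite Hc3, Hc1 in E2. rewrite Hc1, Hc2 in E3.
  assert (e1 : U*v1 = s*u1) by lra. assert (e2 : U*v2 = s*u2) by lra. assert (e3 : U*v3 = s*u3) by lra.
  assert (F1 : U * (A1*v1+A2*v2+A3*v3) = s * (A1*u1+A2*u2+A3*u3)).
  { replace (U * (A1*v1+A2*v2+A3*v3)) with (A1*(U*v1)+A2*(U*v2)+A3*(U*v3)) by ring.
    rewrite e1, e2, e3; ring. }
  assert (F2 : U * V = s * s).
  { unfold V. replace (U * (v1*v1+v2*v2+v3*v3)) with (v1*(U*v1)+v2*(U*v2)+v3*(U*v3)) by ring.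
    rewrite e1, e2, e3. unfold s; ring. }
  assert (a1 : A1*u1+A2*u2+A3*u3 = - U/2) by lra.
  assert (a2 : A1*v1+A2*v2+A3*v3 = - V/2) by lra.
  rewrite a1, a2 in F1.
  assert (Vs : V = s).
  { apply Rmult_eq_reg_l with U; auto. replace (U*V) with (-2 * (U * (-V/2))) by field.
    rewrite F1. field. }
  assert (UV : U = V).
  { rewrite <- Vs in F2. apply Rmult_eq_reg_r with V; auto. }
  apply W0. rewrite Huv. lra.
Qed.

Lemma plane_transfer N u v w :
  dot N u = 0 -> dot N v = 0 -> n2 (cross u v) <> 0 -> dot (cross u v) w = 0 -> dot N w = 0.
Proof.
  intros H1 H2 H3 H4.
  assert (n2 (cross u v) * dot N w =
     dot w (cross u v) * dot N (cross u v)
     + dot w v * (n2 u * dot N v - dot u v * dot N u)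
     - dot w u * (dot u v * dot N v - n2 v * dot N u))
    by (destruct N, u, v, w; unfold n2, dot, cross; simpl; ring).
  assert (dot w (cross u v) = 0) by (rewrite <- H4; destruct w, u, v; unfold dot, cross; simpl; ring).
  rewrite H0, H1, H2 in H. apply Rmult_eq_reg_l with (n2 (cross u v)); auto. lra.
Qed.

Lemma sphere_n2 Rad m : on_sphere Rad m -> n2 (vec m) = Rad ^ 2.
Proof.
  unfold on_sphere, norm3; intros H; rewrite <- H.
  rewrite pow2_sqrt. unfold n2, dot, vec; simpl; ring.
  pose proof (pow2_ge_0 (px m)); pose proof (pow2_ge_0 (py m)); pose proof (pow2_ge_0 (pz m)); lra.
Qed.

Lemma adj_n2 Rad m n : adj Rad m n -> n2 (vsub (vec m) (vec n)) < (Rpower Rad (1/5)) ^ 2.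
Proof.
  intros [_ [_ H]]. unfold dist3 in H.
  set (t := Rpower Rad (1/5)) in *.
  replace ((px m - px n) ^ 2 + (py m - py n) ^ 2 + (pz m - pz n) ^ 2)
    with (n2 (vsub (vec m) (vec n))) in H by (unfold n2, dot, vsub, vec; simpl; ring).
  pose proof (n2_nonneg (vsub (vec m) (vec n))).
  pose proof (sqrt_sqrt _ H0). pose proof (sqrt_pos (n2 (vsub (vec m) (vec n)))).
  nra.
Qed.

Lemma adj_sym Rad m n : adj Rad m n -> adj Rad n m.
Proof.
  intros [H1 [H2 H3]]; split; [|split]; auto.
  unfold dist3 in *. replace ((px n - px m) ^ 2 + (py n - py m) ^ 2 + (pz n - pz m) ^ 2)
   with ((px m - px n) ^ 2 + (py m - py n) ^ 2 + (pz m - pz n) ^ 2) by ring. auto.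
Qed.

Lemma det_zero Rad t a1 a2 a3 x :
  2000 <= t -> Rad = t ^ 5 ->
  on_sphere Rad a1 -> on_sphere Rad a2 -> on_sphere Rad a3 -> on_sphere Rad x ->
  n2 (vsub (vec a2) (vec a1)) <= 28 * t^2 ->
  n2 (vsub (vec a3) (vec a1)) <= 28 * t^2 ->
  n2 (vsub (vec x) (vec a1)) <= 28 * t^2 ->
  det (vsub (vec a2) (vec a1)) (vsub (vec a3) (vec a1)) (vsub (vec x) (vec a1)) = 0.
Proof.
  intros Ht HR S1 S2 S3 S4 B1 B2 B3.
  apply sphere_n2 in S1, S2, S3, S4.
  pose proof (det_bound (vec a1) (vec a2) (vec a3) (vec x) (28 * t^2)) as Hb.
  rewrite S1 in Hb. specialize (Hb ltac:(congruence) ltac:(congruence) ltac:(congruence) B1 B2 B3).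
  destruct (det_isZ a1 a2 a3 x) as [z Hz]. rewrite Hz in Hb |- *.
  rewrite HR in Hb.
  assert (Hz2 : IZR z ^ 2 * t^2 <= 9/4 * 28^4).
  { assert (t^8 > 0) by (apply pow_lt; lra).
    apply Rmult_le_reg_r with (t^8); auto.
    replace (IZR z ^ 2 * t ^ 2 * t ^ 8) with (IZR z ^ 2 * (t ^ 5) ^ 2) by ring.
    replace (9 / 4 * 28 ^ 4 * t ^ 8) with (9 / 4 * (28 * t ^ 2) ^ 4) by ring. auto. }
  assert (Hz1 : IZR z ^ 2 < 1).
  { assert (t^2 >= 4000000) by nra. pose proof (pow2_ge_0 (IZR z)).
    destruct (Rlt_or_le (IZR z ^ 2) 1); auto. nra. }
  destruct (Z.eq_dec z 0) as [->|nz]; auto.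
  assert (1 <= z * z)%Z by nia. apply IZR_le in H. rewrite mult_IZR in H. lra.
Qed.

Lemma reach Rad (S : zpt -> Prop) x y : gconnected Rad x y ->
  (forall a b, S a -> adj Rad a b -> S b) -> S x -> S y.
Proof. intros H C; induction H; eauto. Qed.

Lemma gc_sym Rad x y : gconnected Rad x y -> gconnected Rad y x.
Proof.
  intros H; induction H. apply rt_step, adj_sym; auto. apply rt_refl. eapply rt_trans; eauto.
Qed.

Definition close Rad (v x : zpt) := n2 (vsub (vec x) (vec v)) <= 4 * (Rpower Rad (1/5))^2.

Lemma localL Rad v :
  (exists a1 a2 a3, a1 <> a2 /\ a1 <> a3 /\ a2 <> a3 /\
     gconnected Rad v a1 /\ gconnected Rad v a2 /\ gconnected Rad v a3 /\
     close Rad v a1 /\ close Rad v a2 /\ close Rad v a3)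
  \/ (exists v', forall x, gconnected Rad v x -> x = v \/ x = v').
Proof.
  set (t := Rpower Rad (1/5)).
  assert (T0 : 0 <= t^2) by apply pow2_ge_0.
  assert (Cv : close Rad v v).
  { unfold close. replace (n2 (vsub (vec v) (vec v))) with 0
      by (unfold n2, dot, vsub; simpl; ring). fold t; lra. }
  destruct (classic (exists w, adj Rad v w /\ w <> v)) as [[w [Hw nw]]|Hno].
  - destruct (classic (exists z, (adj Rad v z \/ adj Rad w z) /\ z <> v /\ z <> w)) as [[z [Hz [nzv nzw]]]|Hno2].
    + left. exists v, w, z. split; [auto|]. split; [auto|]. split; [auto|].
      split; [apply rt_refl|]. split; [apply rt_step; auto|].
      split. { destruct Hz. apply rt_step; auto. eapply rt_trans; apply rt_step; eauto. }
      split; auto.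
      assert (Cw : n2 (vsub (vec w) (vec v)) < t^2).
      { rewrite n2_symm. apply adj_n2; auto. }
      split. unfold close; fold t; lra.
      unfold close; fold t. destruct Hz as [Hz|Hz].
      * pose proof (adj_n2 _ _ _ Hz). rewrite n2_symm in H. fold t in H. lra.
      * pose proof (adj_n2 _ _ _ Hz). rewrite n2_symm in H. fold t in H.
        pose proof (n2_tri (vec z) (vec w) (vec v)). lra.
    + right. exists w. intros x Hx.
      apply (reach Rad (fun y => y = v \/ y = w) v x Hx); auto.
      intros a b Ha Hab. destruct (classic (b = v)); auto. destruct (classic (b = w)); auto.
      exfalso; apply Hno2. exists b. split; auto. destruct Ha; subst; auto.
  - right. exists v. intros x Hx.
    apply (reach Rad (fun y => y = v \/ y = v) v x Hx); auto.
    intros a b Ha Hab. destruct (classic (b = v)); auto.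
    exfalso; apply Hno. exists b. destruct Ha; subst; auto.
Qed.

Lemma two_points_plane (S : zpt -> Prop) m v :
  (forall x, S x -> x = m \/ x = v) -> in_affine_plane S.
Proof.
  intros H.
  destruct (Req_dec (px v - px m) 0) as [E1|E1]; destruct (Req_dec (py v - py m) 0) as [E2|E2].
  - exists 1, 0, 0, (px m). split; [lra|]. intros x Hx; destruct (H x Hx); subst; lra.
  - exists (py v - py m), (-(px v - px m)), 0, ((py v - py m) * px m - (px v - px m) * py m).
    split; [left; lra|]. intros x Hx; destruct (H x Hx); subst; ring.
  - exists (py v - py m), (-(px v - px m)), 0, ((py v - py m) * px m - (px v - px m) * py m).
    split; [right; left; lra|]. intros x Hx; destruct (H x Hx); subst; ring.
  - exists (py v - py m), (-(px v - px m)), 0, ((py v - py m) * px m - (px v - px m) * py m).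
    split; [left; lra|]. intros x Hx; destruct (H x Hx); subst; ring.
Qed.

Theorem lemma9p2 :
  exists R0 : R, forall Rad : R, R0 <= Rad ->
    (exists k : Z, Rad ^ 2 = IZR k) ->
    forall m : zpt, on_sphere Rad m -> in_affine_plane (component Rad m).
Proof.
  exists (2001 ^ 5). intros Rad HR _ m Hm.
  assert (Rpos : 0 < Rad) by (assert (0 < 2001^5) by (apply pow_lt; lra); lra).
  set (t := Rpower Rad (1/5)).
  assert (tpos : 0 < t) by (unfold t, Rpower; apply exp_pos).
  assert (t5 : Rad = t ^ 5).
  { unfold t. rewrite <- Rpower_pow by (unfold Rpower; apply exp_pos).
    rewrite Rpower_mult. replace (1/5 * INR 5) with 1 by (simpl; field). rewrite Rpower_1; auto. }
  assert (t2000 : 2000 <= t).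
  { destruct (Rlt_or_le t 2000); auto.
    assert (t^5 <= 2000^5) by (apply pow_incr; lra).
    assert (2000^5 < 2001^5) by (simpl; lra). lra. }
  assert (T0 : 0 <= t^2) by apply pow2_ge_0.
  assert (sph : forall x, gconnected Rad m x -> on_sphere Rad x).
  { intros x Hx. apply (reach Rad (on_sphere Rad) m x Hx); auto. intros a b _ [_ [H _]]; auto. }
  destruct (localL Rad m) as [[p [q [r [npq [npr [nqr [Cp [Cq [Cr [Kp [Kq Kr]]]]]]]]]]] | [v' Hv]].
  2:{ apply (two_points_plane _ m v'). intros x [_ Hx]; auto. }
  unfold close in Kp, Kq, Kr; fold t in Kp, Kq, Kr.
  set (N := cross (vsub (vec q) (vec p)) (vsub (vec r) (vec p))).
  set (inP := fun x => dot N (vsub (vec x) (vec p)) = 0).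
  assert (noncol : forall a1 a2 a3, on_sphere Rad a1 -> on_sphere Rad a2 -> on_sphere Rad a3 ->
            a1 <> a2 -> a1 <> a3 -> a2 <> a3 ->
            n2 (cross (vsub (vec a2) (vec a1)) (vsub (vec a3) (vec a1))) <> 0).
  { intros a1 a2 a3 S1 S2 S3 n12 n13 n23.
    apply sphere_n2 in S1, S2, S3. apply noncollinear; try congruence.
    - intro E; apply n12; symmetry; apply vec_inj; auto.
    - intro E; apply n13; symmetry; apply vec_inj; auto.
    - intro E; apply n23; symmetry; apply vec_inj; auto. }
  set (Q := fun n => gconnected Rad m n /\ forall x, gconnected Rad m x ->
              n2 (vsub (vec x) (vec n)) <= 4 * t^2 -> inP x).
  assert (QN : forall n, gconnected Rad m n -> Q n).
  { intros n Hn. apply (reach Rad Q m n Hn).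
    - intros a b [Ha Qa] Hab. split. eapply rt_trans; [apply Ha | apply rt_step; auto].
      intros x Hx Kx.
      destruct (localL Rad a) as [[a1 [a2 [a3 [n12 [n13 [n23 [C1 [C2 [C3 [K1 [K2 K3]]]]]]]]]]] | [v' Hv]].
      + unfold close in K1, K2, K3; fold t in K1, K2, K3.
        assert (G1 : gconnected Rad m a1) by (apply (rt_trans _ _ _ _ _ Ha C1)).
        assert (G2 : gconnected Rad m a2) by (apply (rt_trans _ _ _ _ _ Ha C2)).
        assert (G3 : gconnected Rad m a3) by (apply (rt_trans _ _ _ _ _ Ha C3)).
        pose proof (Qa a1 G1 K1) as P1. pose proof (Qa a2 G2 K2) as P2. pose proof (Qa a3 G3 K3) as P3.
        unfold inP in *. rewrite dot_sub in P1, P2, P3 |- *.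
        assert (Kxa : n2 (vsub (vec x) (vec a)) <= 10 * t^2).
        { pose proof (n2_tri (vec x) (vec b) (vec a)). pose proof (adj_n2 _ _ _ Hab).
          rewrite n2_symm in H0. fold t in H0. lra. }
        assert (D2 : n2 (vsub (vec a2) (vec a1)) <= 28 * t^2).
        { pose proof (n2_tri (vec a2) (vec a) (vec a1)). rewrite (n2_symm (vec a)) in H. lra. }
        assert (D3 : n2 (vsub (vec a3) (vec a1)) <= 28 * t^2).
        { pose proof (n2_tri (vec a3) (vec a) (vec a1)). rewrite (n2_symm (vec a)) in H. lra. }
        assert (Dx : n2 (vsub (vec x) (vec a1)) <= 28 * t^2).
        { pose proof (n2_tri (vec x) (vec a) (vec a1)). rewrite (n2_symm (vec a)) in H. lra. }
        pose proof (det_zero Rad t a1 a2 a3 x t2000 t5 (sph _ G1) (sph _ G2) (sph _ G3) (sph _ Hx) D2 D3 Dx) as Dz.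
        pose proof (noncol a1 a2 a3 (sph _ G1) (sph _ G2) (sph _ G3) n12 n13 n23) as NC.
        pose proof (plane_transfer N (vsub (vec a2) (vec a1)) (vsub (vec a3) (vec a1)) (vsub (vec x) (vec a1))) as PT.
        unfold det in Dz.
        assert (dot N (vsub (vec a2) (vec a1)) = 0) by (rewrite dot_sub; lra).
        assert (dot N (vsub (vec a3) (vec a1)) = 0) by (rewrite dot_sub; lra).
        specialize (PT H H0 NC Dz). rewrite dot_sub in PT. lra.
      + exfalso.
        assert (Gam : gconnected Rad a m) by (apply gc_sym; auto).
        destruct (Hv p (rt_trans _ _ _ _ _ Gam Cp)) as [E1|E1];
        destruct (Hv q (rt_trans _ _ _ _ _ Gam Cq)) as [E2|E2];
        destruct (Hv r (rt_trans _ _ _ _ _ Gam Cr)) as [E3|E3]; congruence.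
    - split; [apply rt_refl|]. intros x Hx Kx. unfold inP, N.
      apply (det_zero Rad t p q r x t2000 t5 (sph _ Cp) (sph _ Cq) (sph _ Cr) (sph _ Hx)).
      + pose proof (n2_tri (vec q) (vec m) (vec p)). rewrite (n2_symm (vec m)) in H. lra.
      + pose proof (n2_tri (vec r) (vec m) (vec p)). rewrite (n2_symm (vec m)) in H. lra.
      + pose proof (n2_tri (vec x) (vec m) (vec p)). rewrite (n2_symm (vec m)) in H. lra. }
  exists (cx N), (cy N), (cz N), (dot N (vec p)).
  split.
  - pose proof (noncol p q r (sph _ Cp) (sph _ Cq) (sph _ Cr) npq npr nqr) as NC. fold N in NC.
    destruct (Req_dec (cx N) 0); [|left; auto].
    destruct (Req_dec (cy N) 0); [|right; left; auto].
    destruct (Req_dec (cz N) 0); [|right; right; auto].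
    exfalso; apply NC. unfold n2, dot. rewrite H, H0, H1. ring.
  - intros n [_ Hn]. destruct (QN n Hn) as [_ Qn].
    assert (inP n).
    { apply Qn; auto. replace (n2 (vsub (vec n) (vec n))) with 0 by (unfold n2, dot, vsub; simpl; ring). lra. }
    unfold inP in H. rewrite dot_sub in H. unfold dot, vec in H; simpl in H. unfold dot, vec; simpl. lra.
Qed.
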